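(* Let $\mathcal{C}$ be a Fraïssé class with Fraïssé limit $\mathbf{U}$, and let $\mathbf{T}\in\overline{\mathcal{C}}$. Then there exists a universal homogeneous retraction $r:\mathbf{U}\twoheadrightarrow\mathbf{T}$ if and only if both of the following hold: (1) for all $\mathbf{A},\mathbf{B}_1,\mathbf{B}_2\in\mathcal{C}$, embeddings $f_1:\mathbf{A}\hookrightarrow\mathbf{B}_1$, $f_2:\mathbf{A}\hookrightarrow\mathbf{B}_2$ and homomorphisms $h_1:\mathbf{B}_1\to\mathbf{T}$, $h_2:\mathbf{B}_2\to\mathbf{T}$ with $h_1\circ f_1=h_2\circ f_2$, there exist $\mathbf{C}\in\mathcal{C}$, embeddings $g_1:\mathbf{B}_1\hookrightarrow\mathbf{C}$, $g_2:\mathbf{B}_2\hookrightarrow\mathbf{C}$ with $g_1\circ f_1=g_2\circ f_2$ and a homomorphism $h:\mathbf{C}\to\mathbf{T}$ with $h\circ g_1=h_1$ and $h\circ g_2=h_2$; (2) for all $\mathbf{A},\mathbf{B}\in\mathcal{C}$, every embedding $\iota:\mathbf{A}\hookrightarrow\mathbf{B}$ and every homomorphism $h:\mathbf{A}\to\mathbf{T}$ there exists a homomorphism $\hat h:\mathbf{B}\to\mathbf{T}$ with $\hat h\circ\iota=h$.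
   Context: An embedding is an injective homomorphism reflecting all relations. An age is a class of finitely generated structures of one signature with countably many isomorphism types, closed under finitely generated substructures (up to isomorphism) and with the joint embedding property; $\overline{\mathcal{C}}$ is the class of countable structures all of whose finitely generated substructures are isomorphic to members of $\mathcal{C}$. A Fraïssé class is an age with the amalgamation property; its Fraïssé limit is the unique countable homogeneous structure with that age (homogeneous: every isomorphism between finitely generated substructures extends to an automorphism). A homomorphism $r:\mathbf{U}\to\mathbf{T}$ is a retraction if there is a homomorphism $\iota:\mathbf{T}\to\mathbf{U}$ with $r\circ\iota=1_{\mathbf{T}}$. For $\mathbf{U}\in\overline{\mathcal{C}}$, a homomorphism $u:\mathbf{U}\to\mathbf{T}$ is universal within $\overline{\mathcal{C}}$ if for all $\mathbf{A}\in\overline{\mathcal{C}}$ and homomorphisms $h:\mathbf{A}\to\mathbf{T}$ there is an embedding $\iota:\mathbf{A}\hookrightarrow\mathbf{U}$ with $h=u\circ\iota$; homogeneous if for every finitely generated $\mathbf{A}\le\mathbf{U}$ and embedding $\iota:\mathbf{A}\hookrightarrow\mathbf{U}$ with $u\circ\iota=u\restriction_A$ there is an automorphism $\alpha$ of $\mathbf{U}$ with $u\circ\alpha=u$ and $\alpha\restriction_A=\iota$. A universal homogeneous retraction $r:\mathbf{U}\twoheadrightarrow\mathbf{T}$ (with $\mathbf{T}\in\overline{\operatorname{Age}(\mathbf{U})}$) is a retraction that is a universal homogeneous homomorphism to $\mathbf{T}$ within $\overline{\operatorname{Age}(\mathbf{U})}$. *)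

(* Defs.v *)
From Stdlib Require Import List Fin.
Import ListNotations.

Record signature := Signature {
  fsym : Type;                 (* function symbols (constants = arity 0) *)
  fsym_ar : fsym -> nat;
  rsym : Type;
  rsym_ar : rsym -> nat }.

Record structure (S : signature) := Structure {
  carrier :> Type;
  fn : forall f : fsym S, (Fin.t (fsym_ar S f) -> carrier) -> carrier;
  rel : forall r : rsym S, (Fin.t (rsym_ar S r) -> carrier) -> Prop }.

Arguments fn {S} _ _ _.
Arguments rel {S} _ _ _.

Section Defs.
Variable S : signature.

Definition is_hom (A B : structure S) (h : A -> B) : Prop :=
  (forall f xs, h (fn A f xs) = fn B f (fun i => h (xs i))) /\
  (forall r xs, rel A r xs -> rel B r (fun i => h (xs i))).

Definition is_emb (A B : structure S) (h : A -> B) : Prop :=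
  is_hom A B h /\ (forall x y, h x = h y -> x = y) /\
  (forall r xs, rel B r (fun i => h (xs i)) -> rel A r xs).

Definition is_iso (A B : structure S) (h : A -> B) : Prop :=
  is_emb A B h /\ (forall y, exists x, h x = y).

Definition isomorphic (A B : structure S) : Prop := exists h, is_iso A B h.

Definition is_aut (A : structure S) (a : A -> A) : Prop := is_iso A A a.

Definition fin_gen (A : structure S) : Prop :=
  exists l : list A, forall P : A -> Prop,
    (forall x, In x l -> P x) ->
    (forall f xs, (forall i, P (xs i)) -> P (fn A f xs)) ->
    forall x, P x.

Definition countable (A : structure S) : Prop :=
  exists c : A -> nat, forall x y, c x = c y -> x = y.

Definition class := structure S -> Prop.

(* closure under finitely generated substructures up to isomorphism:
   a f.g. substructure of A is (up to iso) a f.g. B embedded into A *)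
Definition is_age (C : class) : Prop :=
  (forall A : structure S, C A -> fin_gen A) /\
  (exists seq : nat -> structure S,
      forall A : structure S, C A -> exists n, isomorphic A (seq n)) /\
  (forall (A B : structure S) (e : B -> A), C A -> fin_gen B -> is_emb B A e ->
      exists B', C B' /\ isomorphic B B') /\
  (forall A B : structure S, C A -> C B -> exists (D : structure S) (e1 : A -> D) (e2 : B -> D),
      C D /\ is_emb A D e1 /\ is_emb B D e2).

Definition amalgamation (C : class) : Prop :=
  forall (A B1 B2 : structure S) (f1 : A -> B1) (f2 : A -> B2),
    C A -> C B1 -> C B2 -> is_emb A B1 f1 -> is_emb A B2 f2 ->
    exists (D : structure S) (g1 : B1 -> D) (g2 : B2 -> D),
      C D /\ is_emb B1 D g1 /\ is_emb B2 D g2 /\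
      (forall a, g1 (f1 a) = g2 (f2 a)).

Definition fraisse_class (C : class) : Prop := is_age C /\ amalgamation C.

(* Age(U): f.g. structures isomorphic to a (f.g.) substructure of U,
   i.e. f.g. structures embeddable into U *)
Definition age (U : structure S) : class :=
  fun A => fin_gen A /\ exists e : A -> U, is_emb A U e.

Definition cbar (C : class) : class :=
  fun A => countable A /\
    forall (B : structure S) (e : B -> A), fin_gen B -> is_emb B A e ->
      exists B', C B' /\ isomorphic B B'.

(* homogeneity; a f.g. substructure of U is given as a f.g. B with an
   embedding e : B -> U (its image), an isomorphism between two such
   substructures as a second embedding e' : B -> U *)
Definition homogeneous (U : structure S) : Prop :=
  forall (B : structure S) (e e' : B -> U), fin_gen B ->
    is_emb B U e -> is_emb B U e' ->
    exists a : U -> U, is_aut U a /\ forall b, a (e b) = e' b.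

Definition fraisse_limit (C : class) (U : structure S) : Prop :=
  countable U /\ homogeneous U /\
  (forall A : structure S, C A -> age U A) /\
  (forall A : structure S, age U A -> exists A', C A' /\ isomorphic A A').

Definition is_retraction (U T : structure S) (r : U -> T) : Prop :=
  is_hom U T r /\ exists i : T -> U, is_hom T U i /\ forall t, r (i t) = t.

Definition universal_within (C : class) (U T : structure S) (u : U -> T) : Prop :=
  forall (A : structure S) (h : A -> T), cbar C A -> is_hom A T h ->
    exists i : A -> U, is_emb A U i /\ forall a, h a = u (i a).

(* homogeneous homomorphism: the f.g. substructure A <= U is given by an
   embedding e : A -> U, the embedding iota : A -> U by e' : A -> U;
   "u o iota = u|_A" is u (e' a) = u (e a), "alpha|_A = iota" is
   alpha (e a) = e' a *)
Definition homogeneous_hom (U T : structure S) (u : U -> T) : Prop :=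
  forall (A : structure S) (e e' : A -> U), fin_gen A ->
    is_emb A U e -> is_emb A U e' -> (forall a, u (e' a) = u (e a)) ->
    exists al : U -> U, is_aut U al /\ (forall x, u (al x) = u x) /\
      (forall a, al (e a) = e' a).

Definition univ_hom_retraction (U T : structure S) (r : U -> T) : Prop :=
  cbar (age U) T /\ is_retraction U T r /\
  universal_within (age U) U T r /\ homogeneous_hom U T r.

End Defs.

Arguments is_hom {S}. Arguments is_emb {S}. Arguments is_iso {S}.
Arguments isomorphic {S}. Arguments is_aut {S}. Arguments fin_gen {S}.
Arguments countable {S}. Arguments is_age {S}. Arguments amalgamation {S}.
Arguments fraisse_class {S}. Arguments age {S}. Arguments cbar {S}.
Arguments homogeneous {S}. Arguments fraisse_limit {S}.
Arguments is_retraction {S}. Arguments universal_within {S}.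
Arguments homogeneous_hom {S}. Arguments univ_hom_retraction {S}.

(* Main.v *)
Require Import Defs.
From Stdlib Require Import List Lia PeanoNat ClassicalEpsilon ProofIrrelevance FunctionalExtensionality Classical.
From Stdlib Require Cantor.
Import ListNotations.

Section Basic.
Context {S : signature}.

Lemma hom_comp (A B C : structure S) (g : A -> B) (h : B -> C) :
  is_hom A B g -> is_hom B C h -> is_hom A C (fun x => h (g x)).
Proof.
  intros [Hg1 Hg2] [Hh1 Hh2]; split.
  - intros f xs. rewrite Hg1, Hh1. reflexivity.
  - intros r xs H. apply (Hh2 r (fun i => g (xs i))). apply Hg2. exact H.
Qed.

Lemma emb_comp (A B C : structure S) (g : A -> B) (h : B -> C) :
  is_emb A B g -> is_emb B C h -> is_emb A C (fun x => h (g x)).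
Proof.
  intros [Hg [Ig Rg]] [Hh [Ih Rh]]; split; [|split].
  - apply hom_comp; assumption.
  - intros x y E. apply Ig, Ih, E.
  - intros r xs H. apply Rg. apply (Rh r (fun i => g (xs i))). exact H.
Qed.

Lemma emb_hom (A B : structure S) (g : A -> B) : is_emb A B g -> is_hom A B g.
Proof. intros [H _]; exact H. Qed.

Lemma iso_inv (A B : structure S) (h : A -> B) : is_iso A B h ->
  exists h' : B -> A, is_emb B A h' /\ (forall a, h' (h a) = a) /\ (forall b, h (h' b) = b).
Proof.
  intros [[[H1 H2] [I R]] Su].
  set (h' := fun b => proj1_sig (constructive_indefinite_description _ (Su b))).
  assert (K : forall b, h (h' b) = b).
  { intro b. unfold h'. destruct (constructive_indefinite_description _ (Su b)); auto. }
  assert (K2 : forall a, h' (h a) = a) by (intro a; apply I; rewrite K; auto).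
  exists h'; split; [|split; auto].
  split; [split|split].
  - intros f ys. apply I. rewrite K, H1. f_equal. apply functional_extensionality. intro; rewrite K; auto.
  - intros r ys Hr. apply R. replace (fun i => h (h' (ys i))) with ys; auto.
    apply functional_extensionality. intro; rewrite K; auto.
  - intros x y E. rewrite <- (K x), <- (K y), E; auto.
  - intros r ys Hr. apply H2 in Hr. replace ys with (fun i => h (h' (ys i))); auto.
    apply functional_extensionality. intro; rewrite K; auto.
Qed.

Lemma iso_emb (A B : structure S) (h : A -> B) : is_iso A B h -> is_emb A B h.
Proof. intros [H _]; exact H. Qed.

Inductive gen (X : structure S) (l : list X) : X -> Prop :=
| gen_in : forall x, In x l -> gen X l x
| gen_fn : forall f xs, (forall i, gen X l (xs i)) -> gen X l (fn X f xs).

Definition Sub (X : structure S) (l : list X) : structure S :=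
  {| carrier := {x : X | gen X l x};
     fn := fun f xs => exist _ (fn X f (fun i => proj1_sig (xs i)))
                         (gen_fn X l f _ (fun i => proj2_sig (xs i)));
     rel := fun r xs => rel X r (fun i => proj1_sig (xs i)) |}.

Lemma sig_eq (X : structure S) (l : list X) (x y : Sub X l) : proj1_sig x = proj1_sig y -> x = y.
Proof.
  destruct x as [x p], y as [y q]; simpl; intros E; subst. f_equal. apply proof_irrelevance.
Qed.

Lemma proj_emb (X : structure S) (l : list X) : is_emb (Sub X l) X (@proj1_sig _ _).
Proof.
  split; [split|split].
  - intros f xs; reflexivity.
  - intros r xs H; exact H.
  - intros x y E; apply sig_eq, E.
  - intros r xs H; exact H.
Qed.

Lemma gen_mono (X : structure S) (l l' : list X) :
  (forall x, In x l -> gen X l' x) -> forall x, gen X l x -> gen X l' x.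
Proof. intros H x G. induction G; [apply H; auto | apply gen_fn; auto]. Qed.

Lemma gen_incl (X : structure S) (l l' : list X) :
  incl l l' -> forall x, gen X l x -> gen X l' x.
Proof. intros H. apply gen_mono. intros x Hx; apply gen_in, H, Hx. Qed.

Lemma sub_fg (X : structure S) (l : list X) : fin_gen (Sub X l).
Proof.
  assert (E : forall l0, (forall x, In x l0 -> In x l) -> exists l1 : list (Sub X l),
     forall x, In x l0 -> exists p, In (exist _ x p) l1).
  { induction l0 as [|a l0 IH]; intros H.
    - exists []; intros x [].
    - destruct IH as [l1 Hl1]. { intros; apply H; right; auto. }
      exists (exist _ a (gen_in X l a (H a (or_introl eq_refl))) :: l1).
      intros x [<-|Hx]. + eexists; left; reflexivity.
      + destruct (Hl1 x Hx) as [p Hp]; exists p; right; auto. }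
  destruct (E l (fun x h => h)) as [l1 Hl1].
  exists l1. intros P Hgen Hfn [x p].
  assert (K : forall x, gen X l x -> forall p, P (exist _ x p)).
  { clear p x. intros x G. induction G as [x Hx|f xs G IH]; intros p.
    - destruct (Hl1 x Hx) as [q Hq]. replace p with q by apply proof_irrelevance. apply Hgen, Hq.
    - specialize (Hfn f (fun i => exist _ (xs i) (G i))). simpl in Hfn.
      replace p with (gen_fn X l f (fun i => proj1_sig (exist (fun x => gen X l x) (xs i) (G i)))
          (fun i => proj2_sig (exist (fun x => gen X l x) (xs i) (G i)))) by apply proof_irrelevance.
      apply Hfn. intro i; apply IH. }
  apply K, p.
Qed.



Definition gens (A : structure S) (lA : list A) : Prop :=
  forall P : A -> Prop, (forall x, In x lA -> P x) ->
    (forall f xs, (forall i, P (xs i)) -> P (fn A f xs)) -> forall x, P x.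

Lemma fg_gens (A : structure S) : fin_gen A -> exists lA, gens A lA.
Proof. intros [l H]; exists l; exact H. Qed.

Lemma hom_image_gen (A X : structure S) (lA : list A) (h : A -> X) :
  gens A lA -> is_hom A X h -> forall a, gen X (map h lA) (h a).
Proof.
  intros G [H1 _]. apply G.
  - intros x Hx. apply gen_in, in_map, Hx.
  - intros f xs IH. rewrite H1. apply gen_fn. exact IH.
Qed.

Lemma hom_unique (A Y : structure S) (lA : list A) (h1 h2 : A -> Y) :
  gens A lA -> is_hom A Y h1 -> is_hom A Y h2 -> (forall x, In x lA -> h1 x = h2 x) ->
  forall a, h1 a = h2 a.
Proof.
  intros G [H1 _] [H2 _] E. apply G; auto.
  intros f xs IH. rewrite H1, H2. f_equal. apply functional_extensionality. exact IH.
Qed.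

Lemma gen_unique (X Y : structure S) (l : list X) (t1 t2 : X -> Y) :
  is_hom (Sub X l) Y (fun x => t1 (proj1_sig x)) -> is_hom (Sub X l) Y (fun x => t2 (proj1_sig x)) ->
  (forall x, In x l -> t1 x = t2 x) -> forall x, gen X l x -> t1 x = t2 x.
Proof.
  intros [H1 _] [H2 _] E x G. induction G as [x Hx|f xs G IH]; auto.
  pose (ys := fun i => exist (fun x => gen X l x) (xs i) (G i) : Sub X l).
  change (fn X f xs) with (proj1_sig (fn (Sub X l) f ys)).
  rewrite H1, H2. f_equal. apply functional_extensionality. intro i; apply IH.
Qed.

Lemma gen_im (D X : structure S) (j : D -> X) (l : list X) :
  is_hom D X j -> (forall x, In x l -> exists d, j d = x) -> forall x, gen X l x -> exists d, j d = x.
Proof.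
  intros [H1 _] E x G. induction G as [x Hx|f xs G IH]; auto.
  pose (ds := fun i => proj1_sig (constructive_indefinite_description _ (IH i))).
  exists (fn D f ds). rewrite H1. f_equal. apply functional_extensionality. intro i.
  unfold ds. destruct (constructive_indefinite_description _ (IH i)); auto.
Qed.

Lemma fin_bound (n : nat) (g : Fin.t n -> nat) : exists K, forall i, g i <= K.
Proof.
  induction n as [|n IH].
  - exists 0. intro i. inversion i.
  - destruct (IH (fun i => g (Fin.FS i))) as [K HK].
    exists (max K (g Fin.F1)). intro i.
    apply (Fin.caseS' i (fun i => g i <= max K (g Fin.F1))).
    + lia.
    + intro j. specialize (HK j). lia.
Qed.

Definition cor (A X : structure S) (l : list X) (h : A -> X) (H : forall a, gen X l (h a)) : A -> Sub X l :=
  fun a => exist _ (h a) (H a).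

Lemma cor_emb (A X : structure S) (l : list X) (h : A -> X) (H : forall a, gen X l (h a)) :
  is_emb A X h -> is_emb A (Sub X l) (cor A X l h H).
Proof.
  intros [[H1 H2] [I R]]. split; [split|split].
  - intros f xs. apply sig_eq. simpl. apply H1.
  - intros r xs Hr. simpl. apply H2, Hr.
  - intros x y E. apply I. apply (f_equal (@proj1_sig _ _)) in E. exact E.
  - intros r xs Hr. apply R. exact Hr.
Qed.

Definition prj (X : structure S) (l : list X) : Sub X l -> X := fun a => proj1_sig a.
Lemma prj_emb (X : structure S) (l : list X) : is_emb (Sub X l) X (prj X l).
Proof. exact (proj_emb X l). Qed.

End Basic.

Section Setting.
Context {S : signature} (C : structure S -> Prop) (U T : structure S).
Hypothesis HU : fraisse_limit C U.

Lemma C_age A : C A -> age U A.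
Proof. destruct HU as (_ & _ & H & _). apply H. Qed.

Lemma age_C A : age U A -> exists A', C A' /\ isomorphic A A'.
Proof. destruct HU as (_ & _ & _ & H). apply H. Qed.

Lemma U_EP (A B : structure S) (e : A -> U) (f : A -> B) :
  fin_gen A -> is_emb A U e -> age U B -> is_emb A B f ->
  exists g : B -> U, is_emb B U g /\ forall a, g (f a) = e a.
Proof.
  intros FA He [FB [eB HeB]] Hf.
  destruct HU as (_ & Hom & _).
  destruct (Hom A (fun a => eB (f a)) e FA (emb_comp _ _ _ _ _ Hf HeB) He) as [a [Ha Ha2]].
  exists (fun b => a (eB b)). split; auto.
  apply emb_comp; auto. apply iso_emb; exact Ha.
Qed.

Definition cond1 : Prop :=
  forall (A B1 B2 : structure S) (f1 : A -> B1) (f2 : A -> B2)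
        (h1 : B1 -> T) (h2 : B2 -> T),
      C A -> C B1 -> C B2 -> is_emb A B1 f1 -> is_emb A B2 f2 ->
      is_hom B1 T h1 -> is_hom B2 T h2 ->
      (forall a, h1 (f1 a) = h2 (f2 a)) ->
      exists (D : structure S) (g1 : B1 -> D) (g2 : B2 -> D) (h : D -> T),
        C D /\ is_emb B1 D g1 /\ is_emb B2 D g2 /\
        (forall a, g1 (f1 a) = g2 (f2 a)) /\ is_hom D T h /\
        (forall b, h (g1 b) = h1 b) /\ (forall b, h (g2 b) = h2 b).

Definition cond2 : Prop :=
  forall (A B : structure S) (i : A -> B) (h : A -> T),
      C A -> C B -> is_emb A B i -> is_hom A T h ->
      exists hh : B -> T, is_hom B T hh /\ forall a, hh (i a) = h a.

Lemma cond1_age : cond1 ->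
  forall (A B1 B2 : structure S) (f1 : A -> B1) (f2 : A -> B2)
        (h1 : B1 -> T) (h2 : B2 -> T),
      age U A -> age U B1 -> age U B2 -> is_emb A B1 f1 -> is_emb A B2 f2 ->
      is_hom B1 T h1 -> is_hom B2 T h2 ->
      (forall a, h1 (f1 a) = h2 (f2 a)) ->
      exists (D : structure S) (g1 : B1 -> D) (g2 : B2 -> D) (h : D -> T),
        C D /\ is_emb B1 D g1 /\ is_emb B2 D g2 /\
        (forall a, g1 (f1 a) = g2 (f2 a)) /\ is_hom D T h /\
        (forall b, h (g1 b) = h1 b) /\ (forall b, h (g2 b) = h2 b).
Proof.
  intros H1 A B1 B2 f1 f2 h1 h2 HA HB1 HB2 Hf1 Hf2 Hh1 Hh2 E.
  destruct (age_C _ HA) as [A0 [CA [al Hal]]].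
  destruct (age_C _ HB1) as [B10 [CB1 [be1 Hbe1]]].
  destruct (age_C _ HB2) as [B20 [CB2 [be2 Hbe2]]].
  destruct (iso_inv _ _ _ Hal) as [al' [Hal' [K1 K2]]].
  destruct (iso_inv _ _ _ Hbe1) as [be1' [Hbe1' [L1 L2]]].
  destruct (iso_inv _ _ _ Hbe2) as [be2' [Hbe2' [M1 M2]]].
  destruct (H1 A0 B10 B20 (fun a0 => be1 (f1 (al' a0))) (fun a0 => be2 (f2 (al' a0)))
     (fun b => h1 (be1' b)) (fun b => h2 (be2' b)) CA CB1 CB2) as
     (D & g1 & g2 & h & CD & Hg1 & Hg2 & Eg & Hh & Eh1 & Eh2).
  - apply emb_comp; [|apply iso_emb; auto]. apply emb_comp; auto.
  - apply emb_comp; [|apply iso_emb; auto]. apply emb_comp; auto.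
  - apply hom_comp; auto. apply emb_hom; auto.
  - apply hom_comp; auto. apply emb_hom; auto.
  - intro a. rewrite L1, M1. apply E.
  - exists D, (fun b => g1 (be1 b)), (fun b => g2 (be2 b)), h.
    split; auto. split; [apply emb_comp; auto; apply iso_emb; auto|].
    split; [apply emb_comp; auto; apply iso_emb; auto|].
    split; [|split; [auto|split]].
    + intro a. specialize (Eg (al a)). simpl in Eg. rewrite K1 in Eg. exact Eg.
    + intro b. rewrite Eh1, L1; auto.
    + intro b. rewrite Eh2, M1; auto.
Qed.

Lemma cond2_age : cond2 ->
  forall (A B : structure S) (i : A -> B) (h : A -> T),
      age U A -> age U B -> is_emb A B i -> is_hom A T h ->
      exists hh : B -> T, is_hom B T hh /\ forall a, hh (i a) = h a.
Proof.
  intros H2 A B i h HA HB Hi Hh.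
  destruct (age_C _ HA) as [A0 [CA [al Hal]]].
  destruct (age_C _ HB) as [B0 [CB [be Hbe]]].
  destruct (iso_inv _ _ _ Hal) as [al' [Hal' [K1 K2]]].
  destruct (iso_inv _ _ _ Hbe) as [be' [Hbe' [L1 L2]]].
  destruct (H2 A0 B0 (fun a0 => be (i (al' a0))) (fun a0 => h (al' a0)) CA CB) as [hh [Hhh E]].
  - apply emb_comp; [|apply iso_emb; auto]. apply emb_comp; auto.
  - apply hom_comp; auto. apply emb_hom; auto.
  - exists (fun b => hh (be b)). split.
    + apply hom_comp; auto. apply emb_hom, iso_emb; auto.
    + intro a. specialize (E (al a)). simpl in E. rewrite K1 in E. exact E.
Qed.

End Setting.

Section Chain.
Context {S : signature} (U T : structure S) (r : U -> T).

Definition EP : Prop :=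
  forall (A B : structure S) (e : A -> U) (f : A -> B) (hB : B -> T),
    fin_gen A -> is_emb A U e -> age U B -> is_emb A B f -> is_hom B T hB ->
    (forall a, hB (f a) = r (e a)) ->
    exists g : B -> U, is_emb B U g /\ (forall a, g (f a) = e a) /\ (forall b, r (g b) = hB b).

Hypothesis Hr : is_hom U T r.
Hypothesis HEP : EP.

Lemma EP0 (B : structure S) (hB : B -> T) : age U B -> is_hom B T hB ->
  exists g : B -> U, is_emb B U g /\ (forall b, r (g b) = hB b).
Proof.
  intros HB Hh. destruct HB as [FB [eB HeB]].
  destruct (HEP (Sub B []) B (fun a => eB (prj B [] a)) (prj B []) hB) as [g [Hg [_ E]]].
  - apply sub_fg.
  - apply (emb_comp _ _ _ (prj B []) eB); [apply prj_emb | exact HeB].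
  - split; [auto|exists eB; auto].
  - apply prj_emb.
  - exact Hh.
  - intros [a Ga]. simpl. apply (gen_unique B T [] hB (fun b => r (eB b))); auto.
    + apply (hom_comp _ _ _ (prj B []) hB); auto. apply emb_hom, prj_emb.
    + apply (hom_comp _ _ _ (prj B []) (fun b => r (eB b))); [apply emb_hom, prj_emb|].
      apply hom_comp; auto. apply emb_hom; auto.
    + intros x [].
  - exists g; auto.
Qed.

Section St.
Context (X : structure S) (rho : X -> T).

Record st := mkst {
  P : structure S; pg : fin_gen P; phi : P -> X; psi : P -> U;
  phie : is_emb P X phi; psie : is_emb P U psi; col : forall p, rho (phi p) = r (psi p) }.

Definition Rel (s s' : st) : Prop :=
  forall p : P s, exists p' : P s', phi s' p' = phi s p /\ psi s' p' = psi s p.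

Lemma Rel_refl s : Rel s s.
Proof. intros p; exists p; auto. Qed.

Lemma Rel_trans s1 s2 s3 : Rel s1 s2 -> Rel s2 s3 -> Rel s1 s3.
Proof.
  intros H1 H2 p. destruct (H1 p) as [p' [E1 E2]]. destruct (H2 p') as [p'' [F1 F2]].
  exists p''. rewrite F1, F2; auto.
Qed.

Hypothesis Hrho : is_hom X T rho.
Hypothesis HX : forall l : list X, exists e, is_emb (Sub X l) U e.

Lemma forth (s : st) (x : X) : exists s', Rel s s' /\ exists p, phi s' p = x.
Proof.
  destruct (fg_gens _ (pg s)) as [lP HlP].
  set (l := map (phi s) lP ++ [x]).
  assert (Hin : forall p, gen X l (phi s p)).
  { intro p. apply (gen_incl X (map (phi s) lP)).
    - unfold l; intros y Hy; apply in_or_app; auto.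
    - apply hom_image_gen; auto. apply emb_hom, phie. }
  set (f := cor (P s) X l (phi s) Hin).
  assert (Hf : is_emb (P s) (Sub X l) f) by (apply cor_emb, phie).
  destruct (HEP (P s) (Sub X l) (psi s) f (fun y => rho (prj X l y))) as [g [Hg [E1 E2]]].
  - apply pg.
  - apply psie.
  - split; [apply sub_fg|apply HX].
  - exact Hf.
  - apply hom_comp; auto. apply emb_hom, proj_emb.
  - intro a. simpl. apply col.
  - assert (Hc : forall p, rho (proj1_sig p) = r (g p)) by (intro p; rewrite E2; auto).
    exists (mkst (Sub X l) (sub_fg X l) (prj X l) g (prj_emb X l) Hg Hc).
    split.
    + intro p. exists (f p). simpl. split; auto.
    + assert (Gx : gen X l x) by (apply gen_in; unfold l; apply in_or_app; right; left; auto).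
      exists (exist _ x Gx). reflexivity.
Qed.

Lemma chain_rel (sq : nat -> st) : (forall k, Rel (sq k) (sq (Nat.succ k))) ->
  forall k k', k <= k' -> Rel (sq k) (sq k').
Proof.
  intros H k k' Hk. induction Hk. apply Rel_refl. eapply Rel_trans; eauto.
Qed.

Lemma limit (sq : nat -> st) : (forall k, Rel (sq k) (sq (Nat.succ k))) ->
  (forall x, exists k p, phi (sq k) p = x) ->
  exists al : X -> U, is_emb X U al /\ (forall x, r (al x) = rho x) /\
    (forall p : P (sq 0), al (phi (sq 0) p) = psi (sq 0) p) /\
    ((forall u, exists k p, psi (sq k) p = u) -> forall u, exists x, al x = u).
Proof.
  intros HR Hcov.
  assert (cov : forall x, {k : nat & {p : P (sq k) | phi (sq k) p = x}}).
  { intro x. destruct (constructive_indefinite_description _ (Hcov x)) as [k Hk].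
    exists k. apply constructive_indefinite_description; exact Hk. }
  set (al := fun x => psi (sq (projT1 (cov x))) (proj1_sig (projT2 (cov x)))).
  assert (key : forall x k p, phi (sq k) p = x -> al x = psi (sq k) p).
  { intros x k p E. unfold al. destruct (cov x) as [k0 [p0 E0]]. simpl.
    destruct (chain_rel sq HR k0 (max k k0) ltac:(lia) p0) as [q0 [Q1 Q2]].
    destruct (chain_rel sq HR k (max k k0) ltac:(lia) p) as [q [R1 R2]].
    assert (q0 = q) as ->.
    { apply (phie (sq (max k k0))). rewrite Q1, R1, E, E0. auto. }
    rewrite <- Q2, R2. auto. }
  assert (common : forall n (xs : Fin.t n -> X), exists K (q : Fin.t n -> P (sq K)),
             forall i, phi (sq K) (q i) = xs i).
  { intros n xs. destruct (fin_bound n (fun i => projT1 (cov (xs i)))) as [K HK].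
    assert (Hq : forall i, exists q : P (sq K), phi (sq K) q = xs i).
    { intro i. destruct (cov (xs i)) as [k [p E]] eqn:Ec. specialize (HK i). rewrite Ec in HK. simpl in HK.
      destruct (chain_rel sq HR k K HK p) as [q [Q1 _]]. exists q. rewrite Q1; auto. }
    exists K, (fun i => proj1_sig (constructive_indefinite_description _ (Hq i))).
    intro i. destruct (constructive_indefinite_description _ (Hq i)); auto. }
  exists al. split; [|split; [|split]].
  - split; [split|split].
    + intros f xs. destruct (common _ xs) as [K [q Hq]].
      assert (Exs : xs = fun i => phi (sq K) (q i)) by (apply functional_extensionality; intro; rewrite Hq; auto).
      subst xs.
      rewrite <- (proj1 (proj1 (phie (sq K)))).
      rewrite (key _ K (fn (P (sq K)) f q) eq_refl).
      rewrite (proj1 (proj1 (psie (sq K)))). f_equal. apply functional_extensionality; intro i.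
      symmetry; apply key; auto.
    + intros R xs H. destruct (common _ xs) as [K [q Hq]].
      assert (Exs : xs = fun i => phi (sq K) (q i)) by (apply functional_extensionality; intro; rewrite Hq; auto).
      subst xs.
      replace (fun i => al (phi (sq K) (q i))) with (fun i => psi (sq K) (q i))
        by (apply functional_extensionality; intro i; symmetry; apply key; auto).
      apply (proj2 (proj1 (psie (sq K)))). apply (proj2 (proj2 (phie (sq K)))). exact H.
    + intros x y E. destruct (cov x) as [k1 [p1 E1]]. destruct (cov y) as [k2 [p2 E2]].
      destruct (chain_rel sq HR k1 (max k1 k2) ltac:(lia) p1) as [q1 [Q1 Q2]].
      destruct (chain_rel sq HR k2 (max k1 k2) ltac:(lia) p2) as [q2 [R1 R2]].
      rewrite (key x _ q1) in E by (rewrite Q1; auto).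
      rewrite (key y _ q2) in E by (rewrite R1; auto).
      apply (psie (sq (max k1 k2))) in E. rewrite <- E1, <- E2, <- Q1, <- R1, E; auto.
    + intros R xs H. destruct (common _ xs) as [K [q Hq]].
      assert (Exs : xs = fun i => phi (sq K) (q i)) by (apply functional_extensionality; intro; rewrite Hq; auto).
      subst xs.
      replace (fun i => al (phi (sq K) (q i))) with (fun i => psi (sq K) (q i)) in H
        by (apply functional_extensionality; intro i; symmetry; apply key; auto).
      apply (proj2 (proj1 (phie (sq K)))). apply (proj2 (proj2 (psie (sq K)))). exact H.
  - intro x. destruct (cov x) as [k [p E]]. rewrite (key x k p E). rewrite <- E, col. auto.
  - intro p. apply key; auto.
  - intros Hc u. destruct (Hc u) as [k [p E]]. exists (phi (sq k) p). rewrite (key _ k p eq_refl); auto.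
Qed.

End St.
End Chain.

Section UH.
Context {S : signature} (U T : structure S) (r : U -> T).
Hypothesis Hr : is_hom U T r.
Hypothesis HEP : EP U T r.

Section Seq.
Context (X : structure S) (rho : X -> T) (Hrho : is_hom X T rho)
  (HX : forall l : list X, exists e, is_emb (Sub X l) U e) (c : X -> nat).

Definition fw (s : st U T r X rho) (x : X) : st U T r X rho :=
  proj1_sig (constructive_indefinite_description _ (forth U T r HEP X rho Hrho HX s x)).

Lemma fw_spec s x : Rel U T r X rho s (fw s x) /\ exists p, phi _ _ _ _ _ (fw s x) p = x.
Proof. unfold fw. destruct (constructive_indefinite_description _ _); auto. Qed.

Definition nxt (s : st U T r X rho) (k : nat) : st U T r X rho :=
  match excluded_middle_informative (exists x : X, c x = k) with
  | left H => fw s (proj1_sig (constructive_indefinite_description _ H))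
  | right _ => s end.

Lemma nxt_spec s k : Rel U T r X rho s (nxt s k) /\
  forall x, (forall y, c y = c x -> y = x) -> c x = k -> exists p, phi _ _ _ _ _ (nxt s k) p = x.
Proof.
  unfold nxt. destruct (excluded_middle_informative _) as [H|H].
  - destruct (constructive_indefinite_description _ H) as [y Hy]; simpl.
    destruct (fw_spec s y) as [H1 H2]. split; auto.
    intros x Ic E. rewrite <- (Ic y) by congruence. auto.
  - split; [apply Rel_refl|]. intros x _ E. exfalso; apply H; eauto.
Qed.

End Seq.

Theorem EP_universal : universal_within (age U) U T r.
Proof.
  intros A h [[c Ic] HA] Hh.
  assert (HX : forall l : list A, exists e, is_emb (Sub A l) U e).
  { intro l. destruct (HA (Sub A l) (prj A l) (sub_fg A l) (prj_emb A l)) as [B' [[_ [eB HeB]] [ga Hga]]].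
    exists (fun x => eB (ga x)). apply emb_comp; auto. apply iso_emb; auto. }
  destruct (EP0 U T r Hr HEP (Sub A []) (fun x => h (prj A [] x))) as [g [Hg Eg]].
  { split; [apply sub_fg| apply HX]. }
  { apply (hom_comp _ _ _ (prj A []) h); auto. apply emb_hom, prj_emb. }
  assert (Hc : forall p, h (prj A [] p) = r (g p)) by (intro; rewrite Eg; auto).
  set (s0 := mkst U T r A h (Sub A []) (sub_fg A []) (prj A []) g (prj_emb A []) Hg Hc).
  set (sq := fix sq n := match n with 0 => s0 | Datatypes.S k => nxt A h Hh HX c (sq k) k end).
  destruct (limit U T r A h sq) as [al [Hal [E1 _]]].
  - intro k. apply (nxt_spec A h Hh HX c (sq k) k).
  - intro x. exists (Datatypes.S (c x)).
    apply (nxt_spec A h Hh HX c (sq (c x)) (c x)); auto.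
  - exists al. split; auto.
Qed.

Definition swap (s : st U T r U r) : st U T r U r :=
  mkst U T r U r (P _ _ _ _ _ s) (pg _ _ _ _ _ s) (psi _ _ _ _ _ s) (phi _ _ _ _ _ s)
    (psie _ _ _ _ _ s) (phie _ _ _ _ _ s) (fun p => eq_sym (col _ _ _ _ _ s p)).

Hypothesis HUc : countable U.

Lemma HXU : forall l : list U, exists e, is_emb (Sub U l) U e.
Proof. intro l. exists (prj U l). apply prj_emb. Qed.

Definition fwU (s : st U T r U r) (u : U) := fw U r Hr HXU s u.

Lemma Rel_swap s t : Rel U T r U r (swap s) (swap t) -> Rel U T r U r s t.
Proof. intros H p. destruct (H p) as [q [E1 E2]]. exists q; auto. Qed.

Definition nxt2 (c : U -> nat) (s : st U T r U r) (k : nat) : st U T r U r :=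
  match excluded_middle_informative (exists x : U, c x = k) with
  | left H => let u := proj1_sig (constructive_indefinite_description _ H) in
              swap (fwU (swap (fwU s u)) u)
  | right _ => s end.

Lemma nxt2_spec (c : U -> nat) (s : st U T r U r) (k : nat) : Rel U T r U r s (nxt2 c s k) /\ forall x, (forall y, c y = c x -> y = x) -> c x = k ->
    (exists p, phi _ _ _ _ _ (nxt2 c s k) p = x) /\ (exists p, psi _ _ _ _ _ (nxt2 c s k) p = x).
Proof.
  unfold nxt2. destruct (excluded_middle_informative _) as [H|H].
  - destruct (constructive_indefinite_description _ H) as [y Hy]; simpl.
    destruct (fw_spec U r Hr HXU s y) as [H1 [p1 Ep1]].
    destruct (fw_spec U r Hr HXU (swap (fwU s y)) y) as [H2 [p2 Ep2]].
    fold (fwU s y) in H1, Ep1. fold (fwU (swap (fwU s y)) y) in H2, Ep2.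
    assert (R : Rel U T r U r (fwU s y) (swap (fwU (swap (fwU s y)) y))).
    { apply Rel_swap. exact H2. }
    split.
    + eapply Rel_trans; eauto.
    + intros x Ic E. rewrite <- (Ic y) by congruence. split.
      * destruct (R p1) as [q [Q1 _]]. exists q. exact (eq_trans Q1 Ep1).
      * exists p2. exact Ep2.
  - split; [apply Rel_refl|]. intros x _ E. exfalso; apply H; eauto.
Qed.

Theorem EP_homogeneous : homogeneous_hom U T r.
Proof.
  intros A e e' FA He He' E.
  destruct HUc as [c Ic].
  set (s0 := mkst U T r U r A FA e e' He He' (fun a => eq_sym (E a))).
  set (sq := fix sq n := match n with 0 => s0 | Datatypes.S k => nxt2 c (sq k) k end).
  destruct (limit U T r U r sq) as [al [Hal [E1 [E2 E3]]]].
  - intro k. apply (nxt2_spec c (sq k) k).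
  - intro x. exists (Datatypes.S (c x)).
    apply (nxt2_spec c (sq (c x)) (c x)); auto.
  - exists al. split; [|split; auto].
    split; auto. apply E3. intro u. exists (Datatypes.S (c u)).
    apply (nxt2_spec c (sq (c u)) (c u)); auto.
Qed.

End UH.

Section Build.
Context {S : signature} (C : structure S -> Prop) (U T : structure S).
Hypothesis HU : fraisse_limit C U.
Hypothesis HT : cbar C T.
Hypothesis H1 : cond1 C T.
Hypothesis H2 : cond2 C T.

Lemma h0_ex : exists h0 : Sub U [] -> T, is_hom (Sub U []) T h0.
Proof.
  destruct HT as [_ HT2].
  destruct (HT2 (Sub T []) (prj T []) (sub_fg T []) (prj_emb T [])) as [B' [CB' [ga Hga]]].
  destruct (C_age C U HU B' CB') as [_ [eB HeB]].
  set (e := fun z => eB (ga z)).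
  assert (He : is_emb (Sub T []) U e) by (apply (emb_comp _ _ _ ga eB); auto; apply iso_emb; auto).
  assert (Him : forall y : Sub U [], exists z, e z = prj U [] y).
  { intros [y G]. simpl. apply (gen_im _ _ e []); auto. apply emb_hom; auto. intros x []. }
  set (zs := fun y => proj1_sig (constructive_indefinite_description _ (Him y))).
  assert (Ez : forall y, e (zs y) = prj U [] y).
  { intro y. unfold zs. destruct (constructive_indefinite_description _ _); auto. }
  exists (fun y => prj T [] (zs y)). split.
  - intros f ys.
    change (prj T [] (zs (fn (Sub U []) f ys)) = prj T [] (fn (Sub T []) f (fun i => zs (ys i)))).
    f_equal. apply (proj1 (proj2 He)). rewrite Ez.
    rewrite (proj1 (proj1 He)). simpl. f_equal. apply functional_extensionality; intro i.
    rewrite Ez. reflexivity.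
  - intros R ys Hr. apply (proj2 (prj_emb T [])).
    apply (proj2 (proj2 He)).
    replace (fun i => e (zs (ys i))) with (fun i => prj U [] (ys i)); auto.
    apply functional_extensionality; intro; rewrite Ez; auto.
Qed.

Lemma T_inh : U -> inhabited T.
Proof.
  intro u. destruct h0_ex as [h0 Hh0].
  assert (Hi : forall x, gen U [] x -> gen U [u] x) by (apply gen_incl; intros x []).
  destruct (cond2_age C U T HU H2 (Sub U []) (Sub U [u]) (cor _ U [u] (prj U []) (fun a => Hi _ (proj2_sig a))) h0)
    as [hh _].
  - split; [apply sub_fg|exists (prj U []); apply prj_emb].
  - split; [apply sub_fg|exists (prj U [u]); apply prj_emb].
  - apply cor_emb, prj_emb.
  - exact Hh0.
  - constructor. exact (hh (exist _ u (gen_in U [u] u (or_introl eq_refl)))).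
Qed.

Definition d0 (u : U) : T := epsilon (T_inh u) (fun _ => True).

Definition invh (D : structure S) (j : D -> U) (hD : D -> T) (y : U) : T :=
  match excluded_middle_informative (exists d, j d = y) with
  | left H => hD (proj1_sig (constructive_indefinite_description _ H))
  | right _ => d0 y end.

Lemma invh_j (D : structure S) (j : D -> U) (hD : D -> T) :
  is_emb D U j -> forall d, invh D j hD (j d) = hD d.
Proof.
  intros Hj d. unfold invh. destruct (excluded_middle_informative _) as [H|H].
  - destruct (constructive_indefinite_description _ H) as [d' E]. simpl.
    apply (proj1 (proj2 Hj)) in E. subst; auto.
  - exfalso; apply H; eauto.
Qed.

Lemma invh_hom (D : structure S) (j : D -> U) (hD : D -> T) :
  is_emb D U j -> is_hom D T hD -> forall l, (forall x, In x l -> exists d, j d = x) ->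
  is_hom (Sub U l) T (fun y => invh D j hD (prj U l y)).
Proof.
  intros Hj Hh l Hl.
  assert (Him : forall y : Sub U l, exists d, j d = prj U l y).
  { intros [y G]. simpl. apply (gen_im _ _ j l); auto. apply emb_hom; auto. }
  assert (common : forall n (xs : Fin.t n -> Sub U l), exists ds : Fin.t n -> D,
     (fun i => prj U l (xs i)) = (fun i => j (ds i))).
  { intros n xs. exists (fun i => proj1_sig (constructive_indefinite_description _ (Him (xs i)))).
    apply functional_extensionality; intro i.
    destruct (constructive_indefinite_description _ _); auto. }
  split.
  - intros f xs. destruct (common _ xs) as [ds Eds].
    change (invh D j hD (fn U f (fun i => prj U l (xs i))) = fn T f (fun i => invh D j hD (prj U l (xs i)))).
    replace (fun i => invh D j hD (prj U l (xs i))) with (fun i => hD (ds i)).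
    + rewrite Eds. rewrite <- (proj1 (proj1 Hj)). rewrite invh_j; auto. apply Hh.
    + apply functional_extensionality; intro i.
      change (prj U l (xs i)) with ((fun i => prj U l (xs i)) i). rewrite Eds. rewrite invh_j; auto.
  - intros R xs H. destruct (common _ xs) as [ds Eds].
    change (rel U R (fun i => prj U l (xs i))) in H. rewrite Eds in H.
    apply (proj2 (proj2 Hj)) in H. apply (proj2 Hh) in H.
    replace (fun i => invh D j hD (prj U l (xs i))) with (fun i => hD (ds i)); auto.
    apply functional_extensionality; intro i.
    change (prj U l (xs i)) with ((fun i => prj U l (xs i)) i). rewrite Eds. rewrite invh_j; auto.
Qed.


Record rs := mkrs { L : list U; rh : U -> T; inv : is_hom (Sub U L) T (fun y => rh (prj U L y)) }.

Definition Ext (s s' : rs) : Prop :=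
  incl (L s) (L s') /\ forall x, gen U (L s) x -> rh s' x = rh s x.

Lemma Ext_refl s : Ext s s.
Proof. split; [apply incl_refl|auto]. Qed.

Lemma Ext_trans s1 s2 s3 : Ext s1 s2 -> Ext s2 s3 -> Ext s1 s3.
Proof.
  intros [I1 E1] [I2 E2]. split; [eapply incl_tran; eauto|].
  intros x G. rewrite E2; auto. apply (gen_incl U (L s1)); auto.
Qed.

Lemma ext_fun (l : list U) (h : Sub U l -> T) : exists rh : U -> T, forall y, rh (prj U l y) = h y.
Proof.
  exists (fun x => match excluded_middle_informative (gen U l x) with
                   | left G => h (exist _ x G) | right _ => d0 x end).
  intros [y G]. simpl. destruct (excluded_middle_informative _) as [G'|G'].
  - f_equal. apply sig_eq; auto.
  - contradiction.
Qed.

Lemma mk_state (l : list U) (h : Sub U l -> T) : is_hom (Sub U l) T h ->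
  exists s, L s = l /\ forall y, rh s (prj U l y) = h y.
Proof.
  intros Hh. destruct (ext_fun l h) as [rh0 E].
  assert (Hi : is_hom (Sub U l) T (fun y => rh0 (prj U l y))).
  { replace (fun y => rh0 (prj U l y)) with h; auto. apply functional_extensionality; intro; rewrite E; auto. }
  exists (mkrs l rh0 Hi). simpl; auto.
Qed.

Lemma init_ex : exists s, L s = [].
Proof.
  destruct h0_ex as [h0 Hh0]. destruct (mk_state [] h0 Hh0) as [s [E _]]. eauto.
Qed.

Lemma add_ex (s : rs) (u : U) : exists s', Ext s s' /\ In u (L s').
Proof.
  assert (Hi : forall x, gen U (L s) x -> gen U (L s ++ [u]) x) by (apply gen_incl, incl_appl, incl_refl).
  set (i := cor _ U (L s ++ [u]) (prj U (L s)) (fun a => Hi _ (proj2_sig a))).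
  destruct (cond2_age C U T HU H2 (Sub U (L s)) (Sub U (L s ++ [u])) i (fun y => rh s (prj U (L s) y)))
    as [hh [Hhh Ehh]].
  - split; [apply sub_fg|exists (prj U _); apply prj_emb].
  - split; [apply sub_fg|exists (prj U _); apply prj_emb].
  - apply cor_emb, prj_emb.
  - apply inv.
  - destruct (mk_state _ hh Hhh) as [s' [EL Eh]].
    exists s'. split; [split|].
    + rewrite EL. apply incl_appl, incl_refl.
    + intros x G. specialize (Eh (exist _ x (Hi x G))). simpl in Eh.
      rewrite Eh. exact (Ehh (exist _ x G)).
    + rewrite EL. apply in_or_app. right; left; auto.
Qed.


Definition Valid (s : rs) (l m : list U) (t : list T) : Prop :=
  (forall x, In x l -> gen U (L s) x) /\
  exists tau : U -> T, is_hom (Sub U (l ++ m)) T (fun y => tau (prj U _ y)) /\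
    (forall x, gen U l x -> tau x = rh s x) /\ Forall2 (fun x v => tau x = v) m t.

Definition Done (s s' : rs) (l m : list U) (t : list T) : Prop :=
  exists G : Sub U (l ++ m) -> U, is_emb _ U G /\
    (forall y, gen U l (prj U _ y) -> G y = prj U _ y) /\
    (forall y, gen U (L s') (G y)) /\
    forall tau : U -> T, is_hom (Sub U (l ++ m)) T (fun y => tau (prj U _ y)) ->
      (forall x, gen U l x -> tau x = rh s x) -> Forall2 (fun x v => tau x = v) m t ->
      forall y, rh s' (G y) = tau (prj U _ y).

Lemma Forall2_eq (f g : U -> T) (m : list U) (t : list T) :
  Forall2 (fun x v => f x = v) m t -> Forall2 (fun x v => g x = v) m t -> forall x, In x m -> f x = g x.
Proof.
  intros F1. induction F1 as [|x v m t E F IH]; intros F2 y Hy; [destruct Hy|].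
  inversion F2; subst. destruct Hy as [<-|Hy]; [congruence|]. apply IH; auto.
Qed.

Lemma task_ex (s : rs) (l m : list U) (t : list T) :
  exists s', Ext s s' /\ (Valid s l m t -> Done s s' l m t).
Proof.
  destruct (classic (Valid s l m t)) as [V|NV];
    [| exists s; split; [apply Ext_refl| intro; contradiction]].
  destruct V as [Hl [tau [Htau [Etau Ft]]]].
  assert (Hi1 : forall x, gen U l x -> gen U (l ++ m) x) by (apply gen_incl, incl_appl, incl_refl).
  assert (Hi2 : forall x, gen U l x -> gen U (L s) x) by (apply gen_mono; auto).
  set (f1 := cor (Sub U l) U (l ++ m) (prj U l) (fun a => Hi1 _ (proj2_sig a))).
  set (f2 := cor (Sub U l) U (L s) (prj U l) (fun a => Hi2 _ (proj2_sig a))).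
  destruct (cond1_age C U T HU H1 (Sub U l) (Sub U (l ++ m)) (Sub U (L s)) f1 f2
     (fun y => tau (prj U _ y)) (fun y => rh s (prj U _ y)))
    as (D & g1 & g2 & hD & CD & Hg1 & Hg2 & Eg & HhD & E1 & E2).
  - split; [apply sub_fg|exists (prj U _); apply prj_emb].
  - split; [apply sub_fg|exists (prj U _); apply prj_emb].
  - split; [apply sub_fg|exists (prj U _); apply prj_emb].
  - apply cor_emb, prj_emb.
  - apply cor_emb, prj_emb.
  - exact Htau.
  - apply inv.
  - intro a. simpl. apply Etau. exact (proj2_sig a).
  - destruct (U_EP C U HU (Sub U (L s)) D (prj U (L s)) g2 (sub_fg _ _) (prj_emb _ _) (C_age C U HU D CD) Hg2)
      as [j [Hj Ej]].
    destruct (fg_gens _ (sub_fg U (l ++ m))) as [lB HlB].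
    set (L' := L s ++ map (fun b => j (g1 b)) lB).
    assert (Hin : forall x, In x L' -> exists d, j d = x).
    { intros x Hx. apply in_app_or in Hx. destruct Hx as [Hx|Hx].
      - exists (g2 (exist _ x (gen_in U (L s) x Hx))). rewrite Ej. reflexivity.
      - apply in_map_iff in Hx. destruct Hx as [b [Eb _]]. eauto. }
    set (s' := mkrs L' (invh D j hD) (invh_hom D j hD Hj HhD L' Hin)).
    exists s'. split; [split|].
    + apply incl_appl, incl_refl.
    + intros x G. simpl.
      transitivity (invh D j hD (j (g2 (exist _ x G)))).
      * f_equal. symmetry. apply Ej.
      * rewrite invh_j; auto.
    + intros _. exists (fun y => j (g1 y)). split; [|split; [|split]].
      * apply emb_comp; auto.
      * intros y Gy. cbv beta.
        assert (Ey : f1 (exist _ (prj U _ y) Gy) = y) by (apply sig_eq; reflexivity).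
        rewrite <- Ey at 1. rewrite Eg, Ej. reflexivity.
      * intro y. simpl. apply (gen_incl U (map (fun b => j (g1 b)) lB)).
        -- apply incl_appr, incl_refl.
        -- apply (hom_image_gen _ _ lB (fun b => j (g1 b))); auto.
           apply emb_hom, emb_comp; auto.
      * intros tau' Htau' Etau' Ft' y. simpl. rewrite invh_j; auto. rewrite E1.
        symmetry. apply (gen_unique U T (l ++ m) tau' tau); auto.
        -- intros x Hx. apply in_app_or in Hx. destruct Hx as [Hx|Hx].
           ++ rewrite Etau', Etau; auto; apply gen_in; auto.
           ++ apply (Forall2_eq _ _ m t); auto.
        -- exact (proj2_sig y).
Qed.

End Build.

Lemma to_nat_inj p q : Cantor.to_nat p = Cantor.to_nat q -> p = q.
Proof. intro E. rewrite <- (Cantor.cancel_of_to p), <- (Cantor.cancel_of_to q), E. auto. Qed.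

Fixpoint codeL (l : list nat) : nat :=
  match l with [] => 0 | a :: l' => Datatypes.S (Cantor.to_nat (a, codeL l')) end.

Lemma codeL_inj l1 l2 : codeL l1 = codeL l2 -> l1 = l2.
Proof.
  revert l2; induction l1 as [|a l1 IH]; intros [|b l2]; cbn -[Cantor.to_nat]; try discriminate; auto.
  intro E. apply Nat.succ_inj in E. apply to_nat_inj in E. injection E as -> E. f_equal; auto.
Qed.

Lemma map_inj {A : Type} (c : A -> nat) (Ic : forall x y, c x = c y -> x = y) l1 l2 :
  map c l1 = map c l2 -> l1 = l2.
Proof.
  revert l2; induction l1 as [|a l1 IH]; intros [|b l2]; simpl; try discriminate; auto.
  intro E. injection E as E1 E2. f_equal; auto.
Qed.

Section Seq.
Context {S : signature} (C : structure S -> Prop) (U T : structure S).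
Hypothesis HU : fraisse_limit C U.
Hypothesis HT : cbar C T.
Hypothesis H1 : cond1 C T.
Hypothesis H2 : cond2 C T.

Definition cU : U -> nat := proj1_sig (constructive_indefinite_description _ (proj1 HU)).
Lemma cU_inj x y : cU x = cU y -> x = y.
Proof. unfold cU. destruct (constructive_indefinite_description _ _); auto. Qed.
Definition cT : T -> nat := proj1_sig (constructive_indefinite_description _ (proj1 HT)).
Lemma cT_inj x y : cT x = cT y -> x = y.
Proof. unfold cT. destruct (constructive_indefinite_description _ _); auto. Qed.

Definition codeTask (tr : list U * list U * list T) : nat :=
  let '(l, m, t) := tr in
  Cantor.to_nat (codeL (map cU l), Cantor.to_nat (codeL (map cU m), codeL (map cT t))).

Lemma codeTask_inj tr1 tr2 : codeTask tr1 = codeTask tr2 -> tr1 = tr2.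
Proof.
  destruct tr1 as [[l1 m1] t1], tr2 as [[l2 m2] t2]; cbn -[Cantor.to_nat]. intro E.
  apply to_nat_inj in E. assert (E1 := f_equal fst E). assert (E' := f_equal snd E).
  cbn -[Cantor.to_nat] in E1, E'. apply to_nat_inj in E'.
  assert (E2 := f_equal fst E'). assert (E3 := f_equal snd E'). cbn in E2, E3.
  apply codeL_inj, map_inj in E1; [|apply cU_inj].
  apply codeL_inj, map_inj in E2; [|apply cU_inj].
  apply codeL_inj, map_inj in E3; [|apply cT_inj]. subst; auto.
Qed.

Definition decodeTask (b : nat) : option (list U * list U * list T) :=
  match excluded_middle_informative (exists tr, codeTask tr = b) with
  | left H => Some (proj1_sig (constructive_indefinite_description _ H))
  | right _ => None end.

Lemma decode_code tr : decodeTask (codeTask tr) = Some tr.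
Proof.
  unfold decodeTask. destruct (excluded_middle_informative _) as [H|H].
  - destruct (constructive_indefinite_description _ H) as [tr' E]. simpl. f_equal. apply codeTask_inj; auto.
  - exfalso; eauto.
Qed.

Definition addS (s : rs U T) (k : nat) : rs U T :=
  match excluded_middle_informative (exists u, cU u = k) with
  | left H => proj1_sig (constructive_indefinite_description _
                (add_ex C U T HU HT H2 s (proj1_sig (constructive_indefinite_description _ H))))
  | right _ => s end.

Lemma addS_spec s k : Ext U T s (addS s k) /\ forall u, cU u = k -> In u (L U T (addS s k)).
Proof.
  unfold addS. destruct (excluded_middle_informative _) as [H|H].
  - destruct (constructive_indefinite_description _ H) as [u' Eu]. simpl.
    destruct (constructive_indefinite_description _ _) as [s' [E I]]. simpl. split; auto.
    intros u Eu2. rewrite <- (cU_inj u' u) by congruence. auto.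
  - split; [apply Ext_refl|]. intros u E; exfalso; eauto.
Qed.

Definition taskS (s : rs U T) (k : nat) : rs U T :=
  match decodeTask (snd (Cantor.of_nat k)) with
  | Some (l, m, t) => proj1_sig (constructive_indefinite_description _ (task_ex C U T HU HT H1 H2 s l m t))
  | None => s end.

Lemma taskS_spec s k : Ext U T s (taskS s k) /\
  forall l m t, decodeTask (snd (Cantor.of_nat k)) = Some (l, m, t) ->
    Valid U T s l m t -> Done U T s (taskS s k) l m t.
Proof.
  unfold taskS. destruct (decodeTask _) as [[[l m] t]|] eqn:Ed.
  - destruct (constructive_indefinite_description _ _) as [s' [E D]]. simpl. split; auto.
    intros l' m' t' E'. injection E' as -> -> ->. auto.
  - split; [apply Ext_refl|]. intros; discriminate.
Qed.

Definition s_init : rs U T :=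
  proj1_sig (constructive_indefinite_description _ (init_ex C U T HU HT H2)).

Fixpoint sq (n : nat) : rs U T :=
  match n with 0 => s_init | Datatypes.S k => taskS (addS (sq k) k) k end.

Lemma sq_step k : Ext U T (sq k) (sq (Datatypes.S k)).
Proof.
  simpl. eapply Ext_trans; [apply addS_spec|apply taskS_spec].
Qed.

Lemma sq_ext k k' : k <= k' -> Ext U T (sq k) (sq k').
Proof.
  intro H. induction H; [apply Ext_refl|]. eapply Ext_trans; eauto. apply sq_step.
Qed.

Lemma In_sq u : In u (L U T (sq (Datatypes.S (cU u)))).
Proof.
  simpl. apply (proj1 (taskS_spec _ _)). apply (proj2 (addS_spec _ _)). auto.
Qed.

Definition rr (y : U) : T := rh U T (sq (Datatypes.S (cU y))) y.

Lemma rr_agree k x : gen U (L U T (sq k)) x -> rr x = rh U T (sq k) x.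
Proof.
  intro G. unfold rr. set (k0 := Datatypes.S (cU x)).
  destruct (sq_ext k0 (max k k0) ltac:(lia)) as [_ E0].
  destruct (sq_ext k (max k k0) ltac:(lia)) as [_ E1].
  rewrite <- E0, <- E1; auto. apply gen_in, In_sq.
Qed.

Lemma gen_sq_mono k k' x : k <= k' -> gen U (L U T (sq k)) x -> gen U (L U T (sq k')) x.
Proof. intros H G. apply (gen_incl U (L U T (sq k))); auto. apply sq_ext; auto. Qed.

Lemma rr_hom : is_hom U T rr.
Proof.
  assert (common : forall n (xs : Fin.t n -> U), exists K, forall i, gen U (L U T (sq K)) (xs i)).
  { intros n xs. destruct (fin_bound n (fun i => Datatypes.S (cU (xs i)))) as [K HK].
    exists K. intro i. apply (gen_sq_mono (Datatypes.S (cU (xs i)))); auto. apply gen_in, In_sq. }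
  split.
  - intros f xs. destruct (common _ xs) as [K HK].
    pose (ys := fun i => exist (fun x => gen U (L U T (sq K)) x) (xs i) (HK i)).
    rewrite (rr_agree K). 2: apply gen_fn; auto.
    change (fn U f xs) with (prj U _ (fn (Sub U (L U T (sq K))) f ys)).
    rewrite (proj1 (inv U T (sq K)) f ys).
    f_equal. apply functional_extensionality; intro i. symmetry. apply rr_agree; auto.
    exact (HK i).
  - intros R xs Hr. destruct (common _ xs) as [K HK].
    pose (ys := fun i => exist (fun x => gen U (L U T (sq K)) x) (xs i) (HK i)).
    pose proof (proj2 (inv U T (sq K)) R ys Hr) as E. simpl in E.
    replace (fun i => rr (xs i)) with (fun i => rh U T (sq K) (xs i)); auto.
    apply functional_extensionality; intro i. symmetry. apply rr_agree; auto.
Qed.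


Lemma list_bound (l : list U) : exists K, forall x, In x l -> In x (L U T (sq K)).
Proof.
  induction l as [|a l [K HK]].
  - exists 0; intros x [].
  - exists (max K (Datatypes.S (cU a))). intros x Hx.
    destruct Hx as [<-|Hx].
    + apply (proj1 (sq_ext (Datatypes.S (cU a)) (max K (Datatypes.S (cU a))) ltac:(lia))). apply In_sq.
    + apply (proj1 (sq_ext K (max K (Datatypes.S (cU a))) ltac:(lia))). auto.
Qed.

Theorem rr_EP : EP U T rr.
Proof.
  intros A B e f hB FA He HB Hf HhB Ecomp.
  destruct (U_EP C U HU A B e f FA He HB Hf) as [j [Hj Ej]].
  destruct (fg_gens _ FA) as [lA HlA]. destruct (fg_gens _ (proj1 HB)) as [lB HlB].
  set (l := map e lA). set (m := map j lB). set (t := map hB lB).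
  destruct (list_bound l) as [K0 HK0].
  set (k := Cantor.to_nat (K0, codeTask (l, m, t))).
  assert (Hk : K0 <= k) by (pose proof (Cantor.to_nat_non_decreasing K0 (codeTask (l, m, t))); unfold k; lia).
  set (s1 := addS (sq k) k).
  destruct (proj1 (addS_spec (sq k) k)) as [Is1 Es1]. fold s1 in Is1, Es1.
  destruct (taskS_spec s1 k) as [_ Hdone].
  assert (Hdec : decodeTask (snd (Cantor.of_nat k)) = Some (l, m, t)).
  { unfold k. rewrite Cantor.cancel_of_to. apply (decode_code (l, m, t)). }
  set (tau := invh C U T HU HT H2 B j hB).
  assert (Hl : forall x, In x l -> gen U (L U T (sq k)) x).
  { intros x Hx. apply gen_in. apply (proj1 (sq_ext K0 k Hk)). auto. }
  assert (Htau : forall b, tau (j b) = hB b) by (intro; apply invh_j; auto).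
  assert (Hagree : forall x, gen U l x -> tau x = rh U T s1 x).
  { intros x G.
    assert (Gk : gen U (L U T (sq k)) x) by (apply (gen_mono U l); auto).
    destruct (gen_im A U e l (emb_hom _ _ _ He)) with (x := x) as [a <-]; auto.
    { intros y Hy. unfold l in Hy. apply in_map_iff in Hy. destruct Hy as [a [<- _]]. eauto. }
    rewrite Es1 by auto. rewrite <- (rr_agree k) by auto. rewrite <- Ecomp, <- Ej. apply Htau. }
  assert (F2 : forall lB0, Forall2 (fun x v => tau x = v) (map j lB0) (map hB lB0)).
  { induction lB0; simpl; constructor; auto. }
  assert (Hin : forall x, In x (l ++ m) -> exists b, j b = x).
  { intros x Hx. apply in_app_or in Hx. destruct Hx as [Hx|Hx].
    - unfold l in Hx. apply in_map_iff in Hx. destruct Hx as [a [<- _]]. exists (f a); auto.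
    - unfold m in Hx. apply in_map_iff in Hx. destruct Hx as [b [<- _]]. eauto. }
  assert (Htauh : is_hom (Sub U (l ++ m)) T (fun y => tau (prj U _ y))).
  { apply invh_hom; auto. }
  destruct (Hdone l m t Hdec) as [G [HG [Gfix [Ggen Gcol]]]].
  { split.
    - intros x Hx. apply (gen_incl U (L U T (sq k))); auto.
    - exists tau. split; [|split]; auto. apply F2. }
  specialize (Gcol tau Htauh Hagree (F2 lB)).
  assert (Hj' : forall b, gen U (l ++ m) (j b)).
  { intro b. apply (gen_incl U m). apply incl_appr, incl_refl.
    apply hom_image_gen; auto. apply emb_hom; auto. }
  exists (fun b => G (cor B U (l ++ m) j Hj' b)). split; [|split].
  - apply (emb_comp _ _ _ (cor B U (l ++ m) j Hj') G); auto. apply cor_emb; auto.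
  - intro a. rewrite Gfix.
    + simpl. apply Ej.
    + simpl. rewrite Ej. apply hom_image_gen; auto. apply emb_hom; auto.
  - intro b. rewrite (rr_agree (Datatypes.S k)) by apply Ggen.
    simpl. fold s1. rewrite Gcol. simpl. apply Htau.
Qed.

End Seq.

Lemma cbar_of_age {S : signature} (U A : structure S) : countable U -> age U A -> cbar (age U) A.
Proof.
  intros [c Ic] [FA [eA HeA]]. split.
  - exists (fun a => c (eA a)). intros x y E. apply (proj1 (proj2 HeA)), Ic, E.
  - intros B e FB He. exists B. split.
    + split; auto. exists (fun b => eA (e b)). apply emb_comp; auto.
    + exists (fun b => b). split; [split; [split|split]|].
      * intros; reflexivity.
      * intros r xs H; exact H.
      * auto.
      * intros r xs H; exact H.
      * intro y; exists y; auto.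
Qed.

Theorem theorem4p2 (S : signature) (C : structure S -> Prop)
    (U T : structure S) :
  fraisse_class C -> fraisse_limit C U -> cbar C T ->
  ((exists r : U -> T, univ_hom_retraction U T r) <->
   ((forall (A B1 B2 : structure S) (f1 : A -> B1) (f2 : A -> B2)
        (h1 : B1 -> T) (h2 : B2 -> T),
      C A -> C B1 -> C B2 -> is_emb A B1 f1 -> is_emb A B2 f2 ->
      is_hom B1 T h1 -> is_hom B2 T h2 ->
      (forall a, h1 (f1 a) = h2 (f2 a)) ->
      exists (D : structure S) (g1 : B1 -> D) (g2 : B2 -> D) (h : D -> T),
        C D /\ is_emb B1 D g1 /\ is_emb B2 D g2 /\
        (forall a, g1 (f1 a) = g2 (f2 a)) /\ is_hom D T h /\
        (forall b, h (g1 b) = h1 b) /\ (forall b, h (g2 b) = h2 b)) /\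
    (forall (A B : structure S) (i : A -> B) (h : A -> T),
      C A -> C B -> is_emb A B i -> is_hom A T h ->
      exists hh : B -> T, is_hom B T hh /\ forall a, hh (i a) = h a))).
Proof.
  intros HC HU HT.
  assert (HUc : countable U) by apply (proj1 HU).
  assert (HUh : homogeneous U) by apply (proj1 (proj2 HU)).
  split.
  - intros [r [Hcbar [[Hr _] [Huniv Hhom]]]]. split.
    + intros A B1 B2 f1 f2 h1 h2 CA CB1 CB2 Hf1 Hf2 Hh1 Hh2 E.
      destruct (Huniv B1 h1 (cbar_of_age U B1 HUc (C_age C U HU B1 CB1)) Hh1) as [i1 [Hi1 Ei1]].
      destruct (Huniv B2 h2 (cbar_of_age U B2 HUc (C_age C U HU B2 CB2)) Hh2) as [i2 [Hi2 Ei2]].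
      destruct (Hhom A (fun a => i2 (f2 a)) (fun a => i1 (f1 a)) (proj1 (C_age C U HU A CA)))
        as [al [Hal [Ral Eal]]].
      { apply emb_comp; auto. }
      { apply emb_comp; auto. }
      { intro a. rewrite <- Ei1, <- Ei2. apply E. }
      destruct (fg_gens _ (proj1 (C_age C U HU B1 CB1))) as [l1 Hl1].
      destruct (fg_gens _ (proj1 (C_age C U HU B2 CB2))) as [l2 Hl2].
      set (l := map i1 l1 ++ map (fun b => al (i2 b)) l2).
      assert (G1 : forall b, gen U l (i1 b)).
      { intro b. apply (gen_incl U (map i1 l1)); [apply incl_appl, incl_refl|].
        apply hom_image_gen; auto. apply emb_hom; auto. }
      assert (Hali2 : is_emb B2 U (fun b => al (i2 b))) by (apply emb_comp; auto; apply iso_emb; auto).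
      assert (G2 : forall b, gen U l (al (i2 b))).
      { intro b. apply (gen_incl U (map (fun b => al (i2 b)) l2)); [apply incl_appr, incl_refl|].
        apply (hom_image_gen _ _ l2 (fun b => al (i2 b))); auto. apply emb_hom; auto. }
      destruct (age_C C U HU (Sub U l)) as [D [CD [ga Hga]]].
      { split; [apply sub_fg|exists (prj U l); apply prj_emb]. }
      destruct (iso_inv _ _ _ Hga) as [ga' [Hga' [K1 K2]]].
      exists D, (fun b => ga (cor B1 U l i1 G1 b)), (fun b => ga (cor B2 U l (fun b => al (i2 b)) G2 b)),
        (fun d => r (prj U l (ga' d))).
      split; auto. split; [|split; [|split; [|split; [|split]]]].
      * apply emb_comp; [apply cor_emb; auto|apply iso_emb; auto].
      * apply emb_comp; [apply cor_emb; auto|apply iso_emb; auto].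
      * intro a. f_equal. apply sig_eq. simpl. symmetry. apply Eal.
      * apply (hom_comp _ _ _ (fun d => prj U l (ga' d)) r); auto.
        apply emb_hom. apply emb_comp; auto. apply prj_emb.
      * intro b. rewrite K1. simpl. symmetry; auto.
      * intro b. rewrite K1. simpl. rewrite Ral. symmetry; auto.
    + intros A B i h CA CB Hi Hh.
      destruct (Huniv A h (cbar_of_age U A HUc (C_age C U HU A CA)) Hh) as [iA [HiA EiA]].
      destruct (C_age C U HU B CB) as [FB [eB HeB]].
      destruct (HUh A (fun a => eB (i a)) iA (proj1 (C_age C U HU A CA))) as [a [Ha Ea]]; auto.
      { apply emb_comp; auto. }
      exists (fun b => r (a (eB b))). split.
      * apply (hom_comp _ _ _ (fun b => a (eB b)) r); auto.
        apply (hom_comp _ _ _ eB a); apply emb_hom; auto. apply iso_emb; auto.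
      * intro x. rewrite Ea. symmetry; auto.
  - intros [H1 H2].
    set (r := rr C U T HU HT H1 H2).
    assert (Hr : is_hom U T r) by apply rr_hom.
    assert (HEP : EP U T r) by apply rr_EP.
    assert (HTc : cbar (age U) T).
    { split; [apply (proj1 HT)|]. intros B e FB He.
      destruct (proj2 HT B e FB He) as [B' [CB' Hiso]]. exists B'. split; auto. apply (C_age C U HU); auto. }
    exists r. split; [exact HTc|split; [|split]].
    + split; auto.
      destruct (EP_universal U T r Hr HEP T (fun t => t) HTc) as [i [Hi Ei]].
      * split; [intros; reflexivity|intros R xs H; exact H].
      * exists i. split; [apply emb_hom; auto|]. intro t. symmetry; auto.
    + apply EP_universal; auto.
    + apply EP_homogeneous; auto.
Qed.
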